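(* Let $n,m,k$ be even with $n=m+k$, let $h:\mathbb F_2^m\to\mathbb F_2$ and $g:\mathbb F_2^k\to\mathbb F_2$ be bent functions, let $H\subset\mathbb F_2^m$ be a linear subspace of codimension $1$, and $\overline H=\mathbb F_2^m\setminus H$. Let $E_1=\mathbb F_2^k\times H$ and $E_2=\{\mathbf 0_k\}\times\overline H$. Define $W:\mathbb F_2^k\times\mathbb F_2^m\to\mathbb Z$ by $W(\alpha,\beta)=(-1)^{g(\alpha)\oplus h(\beta)}2^{n/2}$ for $(\alpha,\beta)\in E_1$, $W(\alpha,\beta)=(-1)^{h(\beta)}2^{m/2+k}$ for $(\alpha,\beta)\in E_2$, and $W(\alpha,\beta)=0$ otherwise. Then $W$ is the Walsh spectrum of a Boolean function $f:\mathbb F_2^n\to\mathbb F_2$. Moreover, the functions $f_1:E_1\to\mathbb F_2$, $f_1(\alpha,\beta)=g(\alpha)\oplus h(\beta)$, and $f_2:E_2\to\mathbb F_2$, $f_2(\alpha,\beta)=h(\beta)$, are totally disjoint spectra functions.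
   Context: $W_f(\omega)=\sum_x(-1)^{f(x)\oplus\omega\cdot x}$; for even $m$, $h$ is bent if $|W_h(\omega)|=2^{m/2}$ for all $\omega$. Totally disjoint spectra functions: for disjoint $S^{[1]},S^{[2]}\subset\mathbb F_2^n$ and functions $f_i:S^{[i]}\to\mathbb F_2$, put $X_i(u)=\sum_{\omega\in S^{[i]}}(-1)^{f_i(\omega)\oplus u\cdot\omega}$; the pair is totally disjoint spectra if $X_1(u)X_2(u)=0$ and $|X_1(u)|+|X_2(u)|>0$ for all $u\in\mathbb F_2^n$. *)

(* Defs.v *)
From HB Require Import structures.
From mathcomp Require Import all_boot all_order all_algebra.
Set Implicit Arguments. Unset Strict Implicit. Unset Printing Implicit Defensive.
Import Order.TTheory GRing.Theory Num.Theory.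
Local Open Scope ring_scope.

Definition sgn2 (a : 'F_2) : int := (-1) ^+ (a : nat).

Definition dot2 (n : nat) (u x : 'rV['F_2]_n) : 'F_2 := (u *m x^T) 0 0.

Definition walsh (n : nat) (f : 'rV['F_2]_n -> 'F_2) (w : 'rV['F_2]_n) : int :=
  \sum_(x : 'rV['F_2]_n) sgn2 (f x + dot2 w x).

(* bent: |W_f(w)| = 2^(n/2) for all w (used for even n) *)
Definition bent (n : nat) (f : 'rV['F_2]_n -> 'F_2) : Prop :=
  forall w, `|walsh f w| = (2 ^ n./2)%:Z.

Definition partial_walsh (n : nat) (S : {set 'rV['F_2]_n})
  (f : 'rV['F_2]_n -> 'F_2) (u : 'rV['F_2]_n) : int :=
  \sum_(w in S) sgn2 (f w + dot2 u w).

Definition totally_disjoint_spectra (n : nat)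
  (S1 : {set 'rV['F_2]_n}) (f1 : 'rV['F_2]_n -> 'F_2)
  (S2 : {set 'rV['F_2]_n}) (f2 : 'rV['F_2]_n -> 'F_2) : Prop :=
  [disjoint S1 & S2] /\
  forall u, partial_walsh S1 f1 u * partial_walsh S2 f2 u = 0 /\
            0 < `|partial_walsh S1 f1 u| + `|partial_walsh S2 f2 u|.

(* Main.v *)
Require Import Defs.
From HB Require Import structures.
From mathcomp Require Import all_boot all_order all_algebra.
From mathcomp Require Import ring zify.
Import Order.TTheory GRing.Theory Num.Theory.
Local Open Scope ring_scope.

Lemma F2cases (a : 'F_2) : a = 0 \/ a = 1.
Proof. case: a => [[|[|n]] Hn]; [left|right|by []]; exact/val_inj. Qed.
Lemma F2n0 (a : 'F_2) : a != 0 -> a = 1.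
Proof. by case: (F2cases a) => ->; rewrite ?eqxx. Qed.

Lemma sgn20 : sgn2 0 = 1. Proof. by []. Qed.
Lemma sgn21 : sgn2 1 = -1. Proof. by []. Qed.
Lemma sgn2D (a b : 'F_2) : sgn2 (a + b) = sgn2 a * sgn2 b.
Proof. by case: (F2cases a) => ->; case: (F2cases b) => ->. Qed.
Lemma sgn2B (a b : 'F_2) : sgn2 (a - b) = sgn2 a * sgn2 b.
Proof. by case: (F2cases a) => ->; case: (F2cases b) => ->. Qed.
Lemma sgn2_norm (a : 'F_2) : `|sgn2 a| = 1.
Proof. by case: (F2cases a) => ->. Qed.

Lemma dot2C n (u x : 'rV['F_2]_n) : dot2 u x = dot2 x u.
Proof. by rewrite /dot2 -[u *m x^T]trmxK trmx_mul trmxK mxE. Qed.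
Lemma dot2Dl n (u v x : 'rV['F_2]_n) : dot2 (u + v) x = dot2 u x + dot2 v x.
Proof. by rewrite /dot2 mulmxDl mxE. Qed.
Lemma dot2Bl n (u v x : 'rV['F_2]_n) : dot2 (u - v) x = dot2 u x - dot2 v x.
Proof. by rewrite /dot2 mulmxBl !mxE. Qed.
Lemma dot20l n (x : 'rV['F_2]_n) : dot2 0 x = 0.
Proof. by rewrite /dot2 mul0mx mxE. Qed.
Lemma dot2_row k m (a y : 'rV['F_2]_k) (b z : 'rV['F_2]_m) :
  dot2 (row_mx a b) (row_mx y z) = dot2 a y + dot2 b z.
Proof. by rewrite /dot2 tr_row_mx mul_row_col mxE. Qed.

Lemma sum_rowmx k m (F : 'rV['F_2]_(k + m) -> int) :
  \sum_w F w = \sum_a \sum_b F (row_mx a b).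
Proof.
rewrite pair_bigA /=.
rewrite (reindex (fun p : 'rV['F_2]_k * 'rV['F_2]_m => row_mx p.1 p.2)) //=.
exists (fun w => (lsubmx w, rsubmx w)) => [[a b] _|w _] /=.
  by rewrite row_mxKl row_mxKr.
by rewrite hsubmxK.
Qed.

Lemma ortho n (v : 'rV['F_2]_n) :
  \sum_x sgn2 (dot2 v x) = if v == 0 then (2 ^ n)%:Z else 0.
Proof.
have [->|v0] := eqVneq v 0.
  under eq_bigr do rewrite dot20l sgn20.
  by rewrite sumr_const card_mx card_Fp // mul1n natz.

move/matrix0Pn: v0 => [i [j vij]].
have i0 : i = 0 by rewrite ord1.
subst i.
set e : 'rV['F_2]_n := delta_mx 0 j.
have ve : dot2 v e = 1.
  by rewrite /dot2 /e trmx_delta -colE mxE (F2n0 _ vij).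
set S := \sum_x _.
have : S = - S.
  rewrite {1}/S (reindex_inj (addIr e)) /= -sumrN.
  by apply: eq_bigr => x _; rewrite dot2C dot2Dl (dot2C _ e) ve sgn2D sgn21 (dot2C _ x) mulrN1.
lia.
Qed.
Lemma ortho2 n (w u : 'rV['F_2]_n) :
  \sum_x sgn2 (dot2 w x) * sgn2 (dot2 u x) = if w == u then (2 ^ n)%:Z else 0.
Proof.
under eq_bigr do rewrite -sgn2B -dot2Bl.
by rewrite ortho subr_eq0.
Qed.

Lemma inversion n (W : 'rV['F_2]_n -> int)
  (HW : forall x, `|\sum_w W w * sgn2 (dot2 w x)| = (2 ^ n)%:Z) :
  exists f : 'rV['F_2]_n -> 'F_2, forall u, walsh f u = W u.
Proof.
set R := fun x => \sum_w W w * sgn2 (dot2 w x).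
exists (fun x => if R x < 0 then 1 else 0) => u.
have hf : forall x, sgn2 (if R x < 0 then 1 else 0) * (2^n)%:Z = R x.
  move=> x; case: ltrP => hx; rewrite ?sgn21 ?sgn20 -(HW x) -/(R x).
    by rewrite ltr0_norm // mulN1r opprK.
  by rewrite ger0_norm // mul1r.
apply: (mulIf (x := (2^n)%:Z)); first by rewrite eqz_nat expn_eq0.
rewrite /walsh big_distrl /=.
transitivity (\sum_x R x * sgn2 (dot2 u x)).
  by apply: eq_bigr => x _; rewrite sgn2D -[in RHS](hf x); ring.
transitivity (\sum_w W w * \sum_x sgn2 (dot2 w x) * sgn2 (dot2 u x)).
  rewrite /R; under eq_bigr do rewrite big_distrl /=.
  rewrite exchange_big /=; apply: eq_bigr => w _; rewrite big_distrr /=.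
  by apply: eq_bigr => x _; ring.
under eq_bigr do rewrite ortho2.
by rewrite (bigD1 u) //= eqxx big1 ?addr0 // => w /negbTE ->; rewrite mulr0.
Qed.
Lemma hyperplane m (H : 'M['F_2]_m) : (\rank H).+1 = m ->
  exists v : 'rV['F_2]_m, forall b : 'rV['F_2]_m, (b <= H)%MS = (dot2 v b == 0).
Proof.
move=> rH.
set C := cokermx H.
have rC : \rank C = 1%N by rewrite mxrank_coker; lia.
have : C != 0 by rewrite -mxrank_eq0 rC.
move/matrix0Pn => [i [j Cij]].
set c := col j C.
have Hc : H *m c = 0 by rewrite /c colE mulmxA mulmx_coker mul0mx.
have c0 : c != 0.
  apply/eqP => c0; move: Cij; have : c i 0 = 0 by rewrite c0 mxE.
  by rewrite mxE => ->; rewrite eqxx.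
have rc : \rank c = 1%N.
  have := rank_leq_col c; have := c0; rewrite -mxrank_eq0; lia.
set K := kermx c.
have HK : (H <= K)%MS by apply/sub_kermxP.
have rK : \rank K = \rank H by rewrite mxrank_ker rc; lia.
have /andP [_ KH] : (H == K)%MS by rewrite -(mxrank_leqif_eq HK).2 rK eqxx.
exists c^T => b.
have -> : (b <= H)%MS = (b <= K)%MS.
  by apply/idP/idP => hb; [apply: submx_trans HK|apply: submx_trans KH].
rewrite /dot2 -[c^T *m b^T]trmxK trmx_mul !trmxK mxE.
apply/sub_kermxP/eqP => [->|h0]; first by rewrite mxE.
by apply/matrixP => p q; rewrite !ord1 h0 mxE.
Qed.
Lemma split_bent m (h : 'rV['F_2]_m -> 'F_2) (P : pred 'rV['F_2]_m) (v : 'rV['F_2]_m)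
  (hv : forall b, P b = (dot2 v b == 0)) (hb : bent h) z :
  let XH := \sum_(b | P b) sgn2 (h b + dot2 z b) in
  let XHb := \sum_(b | ~~ P b) sgn2 (h b + dot2 z b) in
  (XH = 0 /\ `|XHb| = (2 ^ m./2)%:Z) \/ (XHb = 0 /\ `|XH| = (2 ^ m./2)%:Z).
Proof.
move=> XH XHb.
have e1 : walsh h z = XH + XHb by rewrite /walsh (bigID P).
have e2 : walsh h (z + v) = XH - XHb.
  rewrite /walsh (bigID P) /=; congr (_ + _).
    apply: eq_bigr => b Pb; rewrite dot2Dl.
    by move: Pb; rewrite hv => /eqP ->; rewrite addr0.
  rewrite -sumrN; apply: eq_bigr => b Pb; rewrite dot2Dl.
  move: Pb; rewrite hv => /F2n0 ->; by rewrite addrA [LHS]sgn2D sgn21 mulrN1.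
have := hb z; have := hb (z + v); rewrite e1 e2.
clearbody XH XHb.
set s := (2 ^ m./2)%:Z => n2 n1.
have sq : (XH + XHb)^+2 = (XH - XHb)^+2 by rewrite -(real_normK (num_real (XH+XHb))) -(real_normK (num_real (XH - XHb))) n1 n2.
have : (XH + XHb)^+2 - (XH - XHb)^+2 = 4 * (XH * XHb) by ring.
rewrite sq subrr => /esym/eqP; rewrite mulf_eq0 (_ : (4 == 0 :> int) = false) // orFb mulf_eq0 => /orP [/eqP h0|/eqP h0].
  by left; split => //; rewrite h0 add0r in n1.
by right; split => //; rewrite h0 addr0 in n1.
Qed.
Lemma normz_nat (n : nat) : `|n%:Z| = n%:Z. Proof. by []. Qed.
Lemma posz_gt0 (n : nat) : (0 < n)%N -> 0 < n%:Z. Proof. by rewrite ltz_nat. Qed.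

Theorem mainTheorem4 (k m : nat) (Hk : ~~ odd k) (Hm : ~~ odd m)
  (h : 'rV['F_2]_m -> 'F_2) (g : 'rV['F_2]_k -> 'F_2)
  (hbent : bent h) (gbent : bent g)
  (H : 'M['F_2]_m) (Hcodim : ((\rank H).+1 = m)%N) :
  let W := fun (a : 'rV['F_2]_k) (b : 'rV['F_2]_m) =>
    if (b <= H)%MS then sgn2 (g a + h b) * (2 ^ (k + m)./2)%:Z
    else if a == 0 then sgn2 (h b) * (2 ^ (m./2 + k))%:Z
    else 0 in
  let E1 := [set row_mx a b | a in [set: 'rV['F_2]_k], b in [set b : 'rV['F_2]_m | (b <= H)%MS]] in
  let E2 := [set row_mx (0 : 'rV['F_2]_k) b | b in [set b : 'rV['F_2]_m | ~~ (b <= H)%MS]] in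
  let f1 := fun w : 'rV['F_2]_(k + m) => g (lsubmx w) + h (rsubmx w) in
  let f2 := fun w : 'rV['F_2]_(k + m) => h (rsubmx w) in
  (exists f : 'rV['F_2]_(k + m) -> 'F_2,
     forall a b, walsh f (row_mx a b) = W a b)
  /\ totally_disjoint_spectra E1 f1 E2 f2.
Proof.
move=> W E1 E2 f1 f2.
have [v hv] := @hyperplane _ _ Hcodim.
pose XH z := \sum_(b | (b <= H)%MS) sgn2 (h b + dot2 z b).
pose XHb z := \sum_(b | ~~ (b <= H)%MS) sgn2 (h b + dot2 z b).
have sb : forall z, (XH z = 0 /\ `|XHb z| = (2 ^ m./2)%:Z)
                 \/ (XHb z = 0 /\ `|XH z| = (2 ^ m./2)%:Z).
  by move=> z; exact: (@split_bent m h (fun b => (b <= H)%MS) v hv hbent z).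
have Ek : (k./2.*2 = k)%N by have := odd_double_half k; rewrite (negbTE Hk).
have Em : (m./2.*2 = m)%N by have := odd_double_half m; rewrite (negbTE Hm).
have Ekm : ((k + m)./2 = k./2 + m./2)%N by rewrite -{1}Ek -{1}Em -doubleD doubleK.
split.
  have key : forall y z, `|\sum_w W (lsubmx w) (rsubmx w) * sgn2 (dot2 w (row_mx y z))|
                         = (2 ^ (k + m))%:Z.
    move=> y z; rewrite sum_rowmx.
    under eq_bigr do under eq_bigr do rewrite row_mxKl row_mxKr dot2_row.
    have -> : \sum_a \sum_b W a b * sgn2 (dot2 a y + dot2 b z) =
       (2 ^ (k + m)./2)%:Z * walsh g y * XH z + (2 ^ (m./2 + k))%:Z * XHb z.
      rewrite exchange_big (bigID (fun b => (b <= H)%MS)) /=; congr (_ + _).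
        rewrite /XH big_distrr /=; apply: eq_bigr => b hb.
        rewrite /walsh big_distrr big_distrl /=; apply: eq_bigr => a _.
        rewrite /W hb (dot2C _ a y) (dot2C _ b z) !sgn2D; ring.
      rewrite /XHb big_distrr /=; apply: eq_bigr => b hb.
      rewrite (bigD1 0) //= [X in _ + X]big1 => [|a a0].
        by rewrite addr0 /W (negbTE hb) eqxx dot20l add0r (dot2C _ b z) !sgn2D; ring.
      by rewrite /W (negbTE hb) (negbTE a0) mul0r.
    case: (sb z) => [[h0 n0]|[h0 n0]]; rewrite h0.
      rewrite mulr0 add0r normrM n0 normz_nat -PoszM -expnD.
      by congr (Posz (2 ^ _)); rewrite -[in RHS]Ek -[in RHS]Em -!addnn; lia.
    rewrite mulr0 addr0 !normrM n0 (gbent y) normz_nat -!PoszM -!expnD.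
    by congr (Posz (2 ^ _)); rewrite Ekm -[in RHS]Ek -[in RHS]Em -!addnn; lia.
  have [f hf] := @inversion _ (fun w => W (lsubmx w) (rsubmx w))
                   (fun x => eq_ind _ (fun x => _) (key (lsubmx x) (rsubmx x)) _ (hsubmxK x)).
  by exists f => a b; rewrite hf row_mxKl row_mxKr.
have E1e : E1 = [set w | (rsubmx w <= H)%MS].
  apply/setP => w; rewrite inE; apply/imset2P/idP.
    by case=> a b _; rewrite inE => hb ->; rewrite row_mxKr.
  by move=> hw; exists (lsubmx w) (rsubmx w); rewrite ?inE ?hsubmxK.
have E2e : E2 = [set w | (lsubmx w == 0) && ~~ (rsubmx w <= H)%MS].
  apply/setP => w; rewrite inE; apply/imsetP/idP.
    by case=> b; rewrite inE => hb ->; rewrite row_mxKl row_mxKr eqxx.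
  case/andP => /eqP l0 hw; exists (rsubmx w); first by rewrite inE.
  by rewrite -{1}(hsubmxK w) l0.
split.
  rewrite E1e E2e -setI_eq0; apply/eqP/setP => w; rewrite !inE.
  by case: (rsubmx w <= H)%MS; rewrite ?andbF.
move=> u; rewrite -(hsubmxK u).
move: (lsubmx u) (rsubmx u) => y z.
have pw1 : partial_walsh E1 f1 (row_mx y z) = walsh g y * XH z.
  rewrite /partial_walsh E1e (eq_bigl (fun w => (rsubmx w <= H)%MS)) => [|w]; last by rewrite inE.
  rewrite big_mkcond sum_rowmx /= /walsh big_distrl /=; apply: eq_bigr => a _.
  rewrite /XH big_distrr /= [RHS]big_mkcond /=; apply: eq_bigr => b _.
  rewrite row_mxKr /f1 row_mxKl row_mxKr dot2_row.
  by case: ifP => _ //; rewrite !sgn2D; ring.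
have pw2 : partial_walsh E2 f2 (row_mx y z) = XHb z.
  rewrite /partial_walsh E2e (eq_bigl (fun w => (lsubmx w == 0) && ~~ (rsubmx w <= H)%MS)) => [|w]; last by rewrite inE.
  rewrite big_mkcond sum_rowmx /= (bigD1 0) //= [X in _ + X]big1 => [|a a0].
    rewrite addr0 /XHb [RHS]big_mkcond /=; apply: eq_bigr => b _.
    rewrite row_mxKl row_mxKr eqxx /= /f2 row_mxKr dot2_row (dot2C _ y) dot20l add0r.
    by case: ifP.
  by apply: big1 => b _; rewrite row_mxKl (negbTE a0).
rewrite pw1 pw2; case: (sb z) => [[h0 n0]|[h0 n0]]; rewrite h0.
  split; first by rewrite mulr0 mul0r.
  by rewrite mulr0 normr0 add0r n0 posz_gt0 // expn_gt0.
split; first by rewrite mulr0.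
by rewrite normr0 addr0 normrM n0 (gbent y) -PoszM posz_gt0 // muln_gt0 !expn_gt0.
Qed.
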